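(* Let $m,n\in\mathbb{N}$. For $1\le\ell\le m$ let $0<q_{\ell}<1$ and $K_{\ell}=\frac{\pi}{2}\left(\sum_{r\in\mathbb{Z}}q_{\ell}^{r^{2}}\right)^{2}$, and let $v_{j,\ell}\in\mathbb{C}$ ($1\le j\le n$) satisfy $q_{\ell}e^{4\pi|\Im(v_{j,\ell})|}<1$ for all $1\le j\le n$, $1\le \ell\le m$. Then the $n\times n$ matrix \[ \left(\prod_{\ell=1}^{m}\mathrm{dn}\left(2K_{\ell}\left(v_{j,\ell}-\overline{v_{k,\ell}}\right)\right)\right)_{j,k=1}^{n} \] is positive semidefinite, where $\mathrm{dn}$ is computed with nome $q_\ell$ in the $\ell$-th factor.
   Context: For $0<q<1$ and $K=\frac{\pi}{2}\theta_3^2$ with $\theta_3=\sum_{r\in\mathbb{Z}}q^{r^2}$, the Jacobi elliptic function is given by $\mathrm{dn}(2Kv)=\frac{\pi}{K}\sum_{n\in\mathbb{Z}}\frac{q^{n}}{1+q^{2n}}e^{2n\pi vi}$ for $v\in\mathbb{C}$ with $qe^{2\pi|\Im(v)|}<1$. A complex matrix $A=(a_{j,k})$ is positive semidefinite if $\sum_{j,k}a_{j,k}z_j\overline{z_k}\ge0$ for all complex $z_j$. *)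

(* Defs.v *)
From Stdlib Require Import Reals.
From Coquelicot Require Import Coquelicot.
Open Scope R_scope.

Definition Cexp (z : C) : C :=
  (exp (Re z) * cos (Im z), exp (Re z) * sin (Im z)).

Definition CSeries (a : nat -> C) : C :=
  (Series (fun k => Re (a k)), Series (fun k => Im (a k))).

Definition RSeriesZ (a : Z -> R) : R :=
  Series (fun k => a (Z.of_nat k)) + Series (fun k => a (- Z.of_nat (S k))%Z).
Definition CSeriesZ (a : Z -> C) : C :=
  Cplus (CSeries (fun k => a (Z.of_nat k)))
        (CSeries (fun k => a (- Z.of_nat (S k))%Z)).

Definition theta3 (q : R) : R := RSeriesZ (fun r => powerRZ q (r * r)%Z).

Definition Kq (q : R) : R := PI / 2 * (theta3 q) ^ 2.

(* dn_2K q v := dn(2 K v) with nome q, given by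
   (pi/K) sum_{n in Z} q^n/(1+q^(2n)) e^(2 n pi v i). *)
Definition dn_2K (q : R) (v : C) : C :=
  Cmult (RtoC (PI / Kq q))
    (CSeriesZ (fun n =>
       Cmult (RtoC (powerRZ q n / (1 + powerRZ q (2 * n)%Z)))
             (Cexp (Cmult (RtoC (2 * IZR n * PI)) (Cmult v (0, 1)))))).

Fixpoint Csum1 (f : nat -> C) (n : nat) : C :=
  match n with O => RtoC 0 | S n' => Cplus (Csum1 f n') (f (S n')) end.
Fixpoint Cprod1 (f : nat -> C) (m : nat) : C :=
  match m with O => RtoC 1 | S m' => Cmult (Cprod1 f m') (f (S m')) end.

Definition psd (n : nat) (A : nat -> nat -> C) : Prop :=
  forall z : nat -> C,
    let s := Csum1 (fun j => Csum1 (fun k => Cmult (Cmult (A j k) (z j)) (Cconj (z k))) n) n in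
    Im s = 0 /\ 0 <= Re s.

(* Main.v *)
Require Import Defs.
From Stdlib Require Import Reals Lra Lia.
From Coquelicot Require Import Coquelicot.
Open Scope R_scope.

Lemma C_ext (a b : C) : Re a = Re b -> Im a = Im b -> a = b.
Proof. destruct a, b; simpl; intros; subst; reflexivity. Qed.

Definition cconv (a : nat -> C) :=
  ex_series (fun k => Re (a k)) /\ ex_series (fun k => Im (a k)).

Lemma exR_plus (a b : nat -> R) : ex_series a -> ex_series b -> ex_series (fun k => a k + b k).
Proof. intros. apply (ex_series_plus a b); auto. Qed.
Lemma exR_minus (a b : nat -> R) : ex_series a -> ex_series b -> ex_series (fun k => a k - b k).
Proof. intros. apply (ex_series_minus a b); auto. Qed.
Lemma exR_scal (c : R) (a : nat -> R) : ex_series a -> ex_series (fun k => c * a k).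
Proof. intros. apply (ex_series_scal_l c a); auto. Qed.

Lemma exR_zero : ex_series (fun _ : nat => 0).
Proof. apply (ex_series_ext (fun k => 0 * 0^k)). intros; apply Rmult_0_l. apply exR_scal, ex_series_geom. rewrite Rabs_R0; lra. Qed.

Lemma CSeries_ext a b : (forall k, a k = b k) -> CSeries a = CSeries b.
Proof. intros H. unfold CSeries. f_equal; apply Series_ext; intros; rewrite H; auto. Qed.
Lemma cconv_ext a b : (forall k, a k = b k) -> cconv a -> cconv b.
Proof. intros H [H1 H2]. split. apply (ex_series_ext (fun k => Re (a k))); auto; intros; rewrite H; auto. apply (ex_series_ext (fun k => Im (a k))); auto; intros; rewrite H; auto. Qed.

Lemma cconv_plus a b : cconv a -> cconv b ->
  cconv (fun k => Cplus (a k) (b k)) /\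
  CSeries (fun k => Cplus (a k) (b k)) = Cplus (CSeries a) (CSeries b).
Proof.
  intros [a1 a2] [b1 b2]. split. split; simpl; apply exR_plus; auto.
  unfold CSeries; apply C_ext; simpl.
  apply (Series_plus (fun k => Re (a k)) (fun k => Re (b k))); auto.
  apply (Series_plus (fun k => Im (a k)) (fun k => Im (b k))); auto.
Qed.

Lemma cconv_scal w a : cconv a ->
  cconv (fun k => Cmult w (a k)) /\ CSeries (fun k => Cmult w (a k)) = Cmult w (CSeries a).
Proof.
  intros [a1 a2]. destruct w as [w1 w2]. split. split; simpl.
  apply exR_minus; apply exR_scal; auto. apply exR_plus; apply exR_scal; auto.
  unfold CSeries; apply C_ext; simpl.
  - rewrite <- !Series_scal_l, <- Series_minus by (apply exR_scal; auto). reflexivity.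
  - rewrite <- !Series_scal_l, <- Series_plus by (apply exR_scal; auto). reflexivity.
Qed.

Lemma Csum1_ext f g n : (forall j, (1 <= j <= n)%nat -> f j = g j) -> Csum1 f n = Csum1 g n.
Proof. induction n; simpl; intros H; auto. rewrite IHn, H; [auto|lia|]; intros; apply H; lia. Qed.

Lemma Csum1_plus f g n : Csum1 (fun j => Cplus (f j) (g j)) n = Cplus (Csum1 f n) (Csum1 g n).
Proof. induction n; simpl. apply C_ext; simpl; ring. rewrite IHn. field. Qed.

Lemma Csum1_scal w f n : Csum1 (fun j => Cmult w (f j)) n = Cmult w (Csum1 f n).
Proof. induction n; simpl. apply C_ext; simpl; ring. rewrite IHn. field. Qed.

Lemma Csum1_conj f n : Cconj (Csum1 f n) = Csum1 (fun j => Cconj (f j)) n.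
Proof. induction n; simpl. apply C_ext; simpl; ring. rewrite Cplus_conj, IHn. auto. Qed.

Lemma Csum1_series (a : nat -> nat -> C) n :
  (forall j, (1 <= j <= n)%nat -> cconv (a j)) ->
  cconv (fun k => Csum1 (fun j => a j k) n) /\
  CSeries (fun k => Csum1 (fun j => a j k) n) = Csum1 (fun j => CSeries (a j)) n.
Proof.
  induction n; intros H; simpl.
  - split. split; simpl; apply exR_zero.
    unfold CSeries; simpl. apply C_ext; simpl;
    rewrite (Series_ext _ (fun _ => 0 * 0)) by (intros; ring); rewrite Series_scal_l; ring.
  - destruct IHn as [c e]. intros; apply H; lia.
    destruct (cconv_plus _ _ c (H (S n) ltac:(lia))) as [c' e'].
    split; auto. rewrite e', e. auto.
Qed.

Lemma CSeries_nonneg a : cconv a -> (forall k, Im (a k) = 0 /\ 0 <= Re (a k)) ->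
  Im (CSeries a) = 0 /\ 0 <= Re (CSeries a).
Proof.
  intros [c1 c2] H. unfold CSeries; simpl. split.
  - rewrite (Series_ext _ (fun k => 0 * Im (a k))). rewrite Series_scal_l; ring.
    intros k; rewrite (proj1 (H k)); ring.
  - replace 0 with (Series (fun k => 0 * Re (a k))). apply Series_le; auto. intros k; destruct (H k); split; lra.
    rewrite Series_scal_l; ring.
Qed.

Definition Qf n (A : nat -> nat -> C) (z : nat -> C) :=
  Csum1 (fun j => Csum1 (fun k => Cmult (Cmult (A j k) (z j)) (Cconj (z k))) n) n.

Lemma psd_Qf n A : psd n A <-> forall z, Im (Qf n A z) = 0 /\ 0 <= Re (Qf n A z).
Proof. unfold psd, Qf. tauto. Qed.

Lemma psd_one n : psd n (fun _ _ => RtoC 1).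
Proof.
  apply psd_Qf. intros z. unfold Qf.
  rewrite (Csum1_ext _ (fun j => Cmult (z j) (Cconj (Csum1 z n)))).
  2:{ intros j _. rewrite Csum1_conj, <- Csum1_scal. apply Csum1_ext. intros; field. }
  rewrite (Csum1_ext _ (fun j => Cmult (Cconj (Csum1 z n)) (z j))) by (intros; field).
  rewrite Csum1_scal. destruct (Csum1 z n) as [x y]. simpl. split; [ring| nra].
Qed.

Lemma key n B (c : nat -> R) (u : nat -> nat -> C) :
  psd n B -> (forall i, 0 <= c i) ->
  (forall j k, (1 <= j <= n)%nat -> (1 <= k <= n)%nat ->
     cconv (fun i => Cmult (RtoC (c i)) (Cmult (u i j) (Cconj (u i k))))) ->
  forall z, Im (Qf n (fun j k => Cmult (B j k) (CSeries (fun i => Cmult (RtoC (c i)) (Cmult (u i j) (Cconj (u i k)))))) z) = 0 /\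
    0 <= Re (Qf n (fun j k => Cmult (B j k) (CSeries (fun i => Cmult (RtoC (c i)) (Cmult (u i j) (Cconj (u i k)))))) z).
Proof.
  intros HB Hc Hcv z.
  set (t := fun j k i => Cmult (RtoC (c i)) (Cmult (u i j) (Cconj (u i k)))).
  set (w := fun j k => Cmult (Cmult (B j k) (z j)) (Cconj (z k))).
  assert (Hin : forall j, (1 <= j <= n)%nat ->
     cconv (fun i => Csum1 (fun k => Cmult (w j k) (t j k i)) n) /\
     Csum1 (fun k => Cmult (Cmult (Cmult (B j k) (CSeries (t j k))) (z j)) (Cconj (z k))) n
     = CSeries (fun i => Csum1 (fun k => Cmult (w j k) (t j k i)) n)).
  { intros j Hj.
    destruct (Csum1_series (fun k i => Cmult (w j k) (t j k i)) n) as [c1 e1].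
    { intros k Hk. apply (cconv_scal (w j k) (t j k)). apply Hcv; auto. }
    split; auto. rewrite e1. apply Csum1_ext. intros k Hk.
    rewrite (proj2 (cconv_scal (w j k) (t j k) (Hcv j k Hj Hk))). unfold w. field. }
  destruct (Csum1_series (fun j i => Csum1 (fun k => Cmult (w j k) (t j k i)) n) n) as [c2 e2].
  { intros j Hj. apply Hin; auto. }
  unfold Qf. fold t.
  rewrite (Csum1_ext _ (fun j => CSeries (fun i => Csum1 (fun k => Cmult (w j k) (t j k i)) n))).
  2:{ intros j Hj. apply Hin; auto. }
  rewrite <- e2. apply CSeries_nonneg; auto.
  intros i.
  assert (E : Csum1 (fun j => Csum1 (fun k => Cmult (w j k) (t j k i)) n) n =
     Cmult (RtoC (c i)) (Qf n B (fun j => Cmult (z j) (u i j)))).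
  { unfold Qf. rewrite <- Csum1_scal. apply Csum1_ext. intros j _.
    rewrite <- Csum1_scal. apply Csum1_ext. intros k _. unfold w, t.
    rewrite Cmult_conj. field. }
  rewrite E. destruct (proj1 (psd_Qf n B) HB (fun j => Cmult (z j) (u i j))) as [h1 h2].
  destruct (Qf n B (fun j => Cmult (z j) (u i j))) as [x y]. simpl in *. subst y.
  specialize (Hc i). split; [ring|]. nra.
Qed.

Lemma Qf_lin n B (al : R) X Y z :
  Qf n (fun j k => Cmult (B j k) (Cmult (RtoC al) (Cplus (X j k) (Y j k)))) z =
  Cmult (RtoC al) (Cplus (Qf n (fun j k => Cmult (B j k) (X j k)) z) (Qf n (fun j k => Cmult (B j k) (Y j k)) z)).
Proof.
  unfold Qf. rewrite <- Csum1_plus, <- Csum1_scal. apply Csum1_ext; intros j _.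
  rewrite <- Csum1_plus, <- Csum1_scal. apply Csum1_ext; intros k _. field.
Qed.

Definition Tm (cc t : R) (x y : C) : C :=
  Cmult (RtoC cc) (Cexp (Cmult (RtoC t) (Cmult (Cminus x (Cconj y)) (0, 1)))).

Lemma T_bound cc t x y : 0 <= cc ->
  Rabs (Re (Tm cc t x y)) <= cc * exp (-(t * (Im x + Im y))) /\
  Rabs (Im (Tm cc t x y)) <= cc * exp (-(t * (Im x + Im y))).
Proof.
  intros Hc. unfold Tm.
  assert (Hw : Re (Cmult (RtoC t) (Cmult (Cminus x (Cconj y)) (0, 1))) = -(t * (Im x + Im y))).
  { destruct x, y; simpl; ring. }
  set (w := Cmult (RtoC t) (Cmult (Cminus x (Cconj y)) (0, 1))) in *. clearbody w.
  unfold Cexp. rewrite Hw. simpl.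
  set (E := exp (-(t * (Im x + Im y)))). assert (0 < E) by apply exp_pos.
  pose proof (COS_bound (snd w)). pose proof (SIN_bound (snd w)).
  change (snd w) with (Im w) in *. assert (0 <= cc * E) by nra. split; rewrite Rabs_le_between; split; nra.
Qed.

Lemma exp_INR k x : exp (INR k * x) = exp x ^ k.
Proof. induction k. simpl. rewrite Rmult_0_l, exp_0; auto.
  rewrite S_INR. simpl pow. rewrite <- IHk, <- exp_plus. f_equal; ring. Qed.

Lemma exR_le (a b : nat -> R) : (forall k, Rabs (a k) <= b k) -> ex_series b -> ex_series a.
Proof. intros H Hb. apply (ex_series_le a b); auto. Qed.

Definition cZ (q : R) (n : Z) : R := powerRZ q n / (1 + powerRZ q (2 * n)).

Lemma cZ_nonneg q n : 0 < q -> 0 <= cZ q n.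
Proof. intros. unfold cZ. pose proof (powerRZ_le q n H). pose proof (powerRZ_le q (2*n) H).
  apply Rmult_le_pos; auto. apply Rlt_le, Rinv_0_lt_compat; lra. Qed.

Lemma cZ_pos q i : 0 < q -> cZ q (Z.of_nat i) <= q ^ i.
Proof.
  intros Hq. unfold cZ. rewrite <- pow_powerRZ.
  replace (2 * Z.of_nat i)%Z with (Z.of_nat (i + i)) by lia. rewrite <- pow_powerRZ, pow_add.
  assert (0 < q ^ i) by (apply pow_lt; auto).
  apply (Rmult_le_reg_r (1 + q^i * q^i)). nra. unfold Rdiv. rewrite Rmult_assoc, Rinv_l by nra. nra.
Qed.

Lemma cZ_neg q i : 0 < q -> cZ q (- Z.of_nat (S i)) <= q ^ S i.
Proof.
  intros Hq. unfold cZ. rewrite powerRZ_neg', <- pow_powerRZ.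
  replace (2 * - Z.of_nat (S i))%Z with (- Z.of_nat (S i + S i))%Z by lia.
  rewrite powerRZ_neg', <- pow_powerRZ, pow_add.
  assert (0 < q ^ S i) by (apply pow_lt; auto). set (p := q ^ S i) in *.
  replace (/ p / (1 + / (p * p))) with (p / (p * p + 1)) by (field; nra).
  apply (Rmult_le_reg_r (p*p + 1)). nra. unfold Rdiv. rewrite Rmult_assoc, Rinv_l by nra. nra.
Qed.

Lemma r_lt q a b : 0 < q -> q * exp (4 * PI * a) < 1 -> q * exp (4 * PI * b) < 1 ->
  0 <= q * exp (2 * PI * (a + b)) < 1.
Proof.
  intros Hq Ha Hb. set (r := q * exp (2 * PI * (a + b))).
  assert (0 < exp (2 * PI * (a + b))) by apply exp_pos.
  assert (0 < exp (4 * PI * a)) by apply exp_pos.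
  assert (0 < exp (4 * PI * b)) by apply exp_pos.
  assert (r * r = (q * exp (4 * PI * a)) * (q * exp (4 * PI * b))).
  { unfold r. replace (q * exp (2 * PI * (a + b)) * (q * exp (2 * PI * (a + b)))) with
      (q * q * (exp (2 * PI * (a + b)) * exp (2 * PI * (a + b)))) by ring.
    replace (q * exp (4 * PI * a) * (q * exp (4 * PI * b))) with
      (q * q * (exp (4 * PI * a) * exp (4 * PI * b))) by ring.
    rewrite <- !exp_plus. f_equal. f_equal. ring. }
  assert (0 <= r) by (unfold r; nra).
  assert (0 < q * exp (4 * PI * a)) by nra. assert (0 < q * exp (4 * PI * b)) by nra.
  assert (r * r < 1) by (rewrite H2; nra).
  split; nra.
Qed.

Lemma pow1_le a k : 0 <= a <= 1 -> a ^ k <= 1.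
Proof. intros H. induction k; simpl. lra. assert (0 <= a ^ k) by (apply pow_le; lra). nra. Qed.

Lemma exp_mono a b : a <= b -> exp a <= exp b.
Proof. intros [H|H]. left; apply exp_increasing; auto. subst; lra. Qed.

Lemma exp_bnd (N s a b : R) : 0 <= N -> Rabs s = 1 -> 
  exp (-(2 * (s * N) * PI * (a + b))) <= exp (N * (2 * PI * (Rabs a + Rabs b))).
Proof.
  intros HN Hs. apply exp_mono.
  pose proof PI_RGT_0.
  assert (Hab : Rabs (-(s * (a + b))) <= Rabs a + Rabs b).
  { rewrite Rabs_Ropp, Rabs_mult, Hs, Rmult_1_l. apply Rabs_triang. }
  pose proof (Rle_abs (-(s * (a + b)))).
  replace (-(2 * (s * N) * PI * (a + b))) with (2 * PI * N * (-(s * (a + b)))) by ring.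
  assert (0 <= 2 * PI * N) by nra. nra.
Qed.

Lemma conv_gen (q : R) x y (f : nat -> R) (s : R) (N : nat -> nat) :
  0 < q -> q * exp (4 * PI * Rabs (Im x)) < 1 -> q * exp (4 * PI * Rabs (Im y)) < 1 ->
  Rabs s = 1 -> (forall i, (i <= N i)%nat) ->
  (forall i, 0 <= f i <= q ^ N i) ->
  cconv (fun i => Tm (f i) (2 * (s * INR (N i)) * PI) x y).
Proof.
  intros Hq Hx Hy Hs HN Hf.
  destruct (r_lt q _ _ Hq Hx Hy) as [r0 r1].
  set (E := exp (2 * PI * (Rabs (Im x) + Rabs (Im y)))) in *.
  assert (Hb : forall i, f i * exp (-(2 * (s * INR (N i)) * PI * (Im x + Im y))) <= (q * E) ^ i).
  { intros i. specialize (Hf i).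
    pose proof (exp_bnd (INR (N i)) s (Im x) (Im y) (pos_INR _) Hs).
    rewrite exp_INR in H. fold E in H.
    apply Rle_trans with ((q * E) ^ (N i)).
    rewrite Rpow_mult_distr. apply Rmult_le_compat; try lra. left; apply exp_pos.
    specialize (HN i). replace (N i) with (i + (N i - i))%nat by lia. rewrite pow_add.
    assert (0 <= (q*E)^i) by (apply pow_le; lra).
    assert ((q*E)^(N i - i) <= 1) by (apply pow1_le; lra). nra. }
  assert (G : ex_series (fun i => (q * E) ^ i)) by (apply ex_series_geom; rewrite Rabs_pos_eq; lra).
  split; [apply (exR_le _ (fun i => (q * E) ^ i)) | apply (exR_le _ (fun i => (q * E) ^ i))]; auto; intros i;
    destruct (T_bound (f i) (2 * (s * INR (N i)) * PI) x y (proj1 (Hf i))) as [h1 h2];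
    eapply Rle_trans; eauto.
Qed.

Definition Uf (t : R) (x : C) := Cexp (Cmult (RtoC t) (Cmult x (0,1))).

Lemma Tm_fact cc t x y : Tm cc t x y = Cmult (RtoC cc) (Cmult (Uf t x) (Cconj (Uf t y))).
Proof.
  unfold Tm, Uf. f_equal. destruct x as [a1 a2], y as [b1 b2].
  replace (Cmult (RtoC t) (Cmult (Cminus (a1,a2) (Cconj (b1,b2))) (0,1))) with
    ((-(t*a2) + -(t*b2)), (t*a1 - t*b1)) by (apply C_ext; simpl; ring).
  replace (Cmult (RtoC t) (Cmult (a1,a2) (0,1))) with (-(t*a2), t*a1) by (apply C_ext; simpl; ring).
  replace (Cmult (RtoC t) (Cmult (b1,b2) (0,1))) with (-(t*b2), t*b1) by (apply C_ext; simpl; ring).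
  unfold Cexp. apply C_ext; simpl; rewrite exp_plus.
  rewrite cos_minus; ring. rewrite sin_minus; ring.
Qed.

Lemma dn_expand q x y :
  dn_2K q (Cminus x (Cconj y)) =
  Cmult (RtoC (PI / Kq q))
    (Cplus (CSeries (fun i => Tm (cZ q (Z.of_nat i)) (2 * (1 * INR i) * PI) x y))
           (CSeries (fun i => Tm (cZ q (- Z.of_nat (S i))) (2 * (-1 * INR (S i)) * PI) x y))).
Proof.
  unfold dn_2K, CSeriesZ. f_equal. f_equal; apply CSeries_ext; intros i; unfold Tm, cZ.
  - rewrite <- INR_IZR_INZ. replace (2 * (1 * INR i) * PI) with (2 * INR i * PI) by ring; reflexivity.
  - rewrite opp_IZR, <- INR_IZR_INZ. replace (2 * (-1 * INR (S i)) * PI) with (2 * - INR (S i) * PI) by ring; reflexivity.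
Qed.

Lemma Qf_ext n A A' z : (forall j k, A j k = A' j k) -> Qf n A z = Qf n A' z.
Proof. intros H. unfold Qf. apply Csum1_ext; intros j _. apply Csum1_ext; intros k _. rewrite H; auto. Qed.

Lemma al_nonneg q : 0 <= PI / Kq q.
Proof.
  pose proof PI_RGT_0. unfold Kq.
  assert (0 <= PI / 2 * theta3 q ^ 2) by (pose proof (pow2_ge_0 (theta3 q)); nra).
  destruct H0 as [H0|H0]. unfold Rdiv; apply Rmult_le_pos; [lra|]. left; apply Rinv_0_lt_compat; auto.
  rewrite <- H0. unfold Rdiv. rewrite Rinv_0. lra.
Qed.

Lemma comb (al : R) (a b : C) : 0 <= al -> Im a = 0 -> 0 <= Re a -> Im b = 0 -> 0 <= Re b ->
  Im (Cmult (RtoC al) (Cplus a b)) = 0 /\ 0 <= Re (Cmult (RtoC al) (Cplus a b)).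
Proof. destruct a as [x1 x2], b as [y1 y2]; simpl; intros; subst. split; [ring|nra]. Qed.

Lemma step n B q (v : nat -> C) :
  psd n B -> 0 < q < 1 ->
  (forall j, (1 <= j <= n)%nat -> q * exp (4 * PI * Rabs (Im (v j))) < 1) ->
  psd n (fun j k => Cmult (B j k) (dn_2K q (Cminus (v j) (Cconj (v k))))).
Proof.
  intros HB Hq Hv. apply psd_Qf. intros z.
  set (X := fun j k => CSeries (fun i => Cmult (RtoC (cZ q (Z.of_nat i)))
        (Cmult (Uf (2 * (1 * INR i) * PI) (v j)) (Cconj (Uf (2 * (1 * INR i) * PI) (v k)))))).
  set (Y := fun j k => CSeries (fun i => Cmult (RtoC (cZ q (- Z.of_nat (S i))))
        (Cmult (Uf (2 * (-1 * INR (S i)) * PI) (v j)) (Cconj (Uf (2 * (-1 * INR (S i)) * PI) (v k)))))).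
  rewrite (Qf_ext _ _ (fun j k => Cmult (B j k) (Cmult (RtoC (PI / Kq q)) (Cplus (X j k) (Y j k))))).
  2:{ intros j k. rewrite dn_expand. unfold X, Y. do 3 f_equal; apply CSeries_ext; intros i; apply Tm_fact. }
  rewrite Qf_lin.
  destruct (key n B (fun i => cZ q (Z.of_nat i)) (fun i j => Uf (2 * (1 * INR i) * PI) (v j)) HB) with (z := z)
    as [a1 a2].
  { intros; apply cZ_nonneg; lra. }
  { intros j k Hj Hk. eapply cconv_ext. intros i; apply Tm_fact.
    apply (conv_gen q) with (N := fun i => i); try (apply Hv; auto); try lra.
    rewrite Rabs_R1; auto. auto. intros i; split; [apply cZ_nonneg; lra| apply cZ_pos; lra]. }
  destruct (key n B (fun i => cZ q (- Z.of_nat (S i))) (fun i j => Uf (2 * (-1 * INR (S i)) * PI) (v j)) HB) with (z := z)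
    as [b1 b2].
  { intros; apply cZ_nonneg; lra. }
  { intros j k Hj Hk. eapply cconv_ext. intros i; apply Tm_fact.
    apply (conv_gen q) with (N := fun i => S i); try (apply Hv; auto); try lra.
    rewrite Rabs_left; lra. auto. intros i; split; [apply cZ_nonneg; lra| apply cZ_neg; lra]. }
  apply comb; auto. apply al_nonneg.
Qed.

Theorem mainTheorem2 (m n : nat) (q : nat -> R) (v : nat -> nat -> C)
  (hq : forall l, (1 <= l <= m)%nat -> 0 < q l < 1)
  (hv : forall j l, (1 <= j <= n)%nat -> (1 <= l <= m)%nat ->
          q l * exp (4 * PI * Rabs (Im (v j l))) < 1) :
  psd n (fun j k =>
    Cprod1 (fun l => dn_2K (q l) (Cminus (v j l) (Cconj (v k l)))) m).
Proof.
  assert (H : forall m', (m' <= m)%nat -> psd n (fun j k =>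
    Cprod1 (fun l => dn_2K (q l) (Cminus (v j l) (Cconj (v k l)))) m')).
  { induction m'; intros Hm.
    - apply psd_one.
    - simpl. apply (step n _ (q (S m')) (fun j => v j (S m'))).
      apply IHm'; lia. apply hq; lia. intros j Hj; apply hv; auto; lia. }
  apply H; lia.
Qed.
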